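(* Let $\beta\ge5$ and $\epsilon\in\{1,-1\}$. (a) There is no tight chiral $4$-polytope of type $\{4,2^\beta,8\}$ whose standard generators satisfy $\sigma_2^{-1}\sigma_1=\sigma_1^{-1}\sigma_2^{1+2^{\beta-1}}$ and $\sigma_2\sigma_3^2=\sigma_3^2\sigma_2^{1+\epsilon2^{\beta-2}}$. (b) There is no tight chiral $4$-polytope of type $\{4,2^\beta,2^{\beta-1}\}$ whose standard generators satisfy $\sigma_2^{-1}\sigma_1=\sigma_1^{-1}\sigma_2^{1+2^{\beta-1}}$, $\sigma_3^{-1}\sigma_2=\sigma_2^{3+\epsilon2^{\beta-2}}\sigma_3^{1-2^{\beta-2}}$ and $\sigma_3\sigma_2^{-1}=\sigma_2^{-3+\epsilon2^{\beta-2}}\sigma_3^{-1+2^{\beta-2}}$.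
   Context: For a chiral polytope with base flag $\Phi$, the standard generators $\sigma_1,\sigma_2,\sigma_3$ of its automorphism group are the automorphisms with $\Phi\sigma_i=\Phi^{i(i-1)}$, where $\Phi^j$ is the flag differing from $\Phi$ only in its $j$-face; for type $\{p,q,r\}$ they have orders $p,q,r$ and satisfy $(\sigma_1\sigma_2)^2=(\sigma_2\sigma_3)^2=(\sigma_1\sigma_2\sigma_3)^2=1$. Tight: type $\{p,q,r\}$ with exactly $2pqr$ flags. *)

(* Defs.v *)
From mathcomp Require Import all_boot all_order all_algebra all_fingroup.
Set Implicit Arguments. Unset Strict Implicit. Unset Printing Implicit Defensive.

(* A rank-4 abstract polytope is given by a finite carrier T of faces, a
   partial order [le], and a shifted rank function [rk] : rk F = rank F + 1,
   so that rk takes values 0..5 (rank -1 .. 4). *)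
Section Polytope.
Variables (T : finType) (le : rel T) (rk : T -> nat).

Definition ltp (x y : T) : bool := le x y && (x != y).

Definition chainb (A : {set T}) : bool :=
  [forall x in A, forall y in A, le x y || le y x].

Definition flagb (A : {set T}) : bool :=
  chainb A && [forall B : {set T}, ((A \subset B) && chainb B) ==> (B == A)].

(* G is the j-adjacent flag F^j of F (j = rank, 0 <= j <= 3): it differs
   from F exactly in its face of rank j. *)
Definition adjacent (j : nat) (F G : {set T}) : bool :=
  [&& flagb F, flagb G, F != G &
      [set x in F | rk x != j.+1] == [set x in G | rk x != j.+1]].

Definition adjacent_any (F G : {set T}) : bool :=
  [&& flagb F, flagb G & #|F :\: G| == 1%N].

Definition strongly_flag_connected : Prop :=
  forall F G, flagb F -> flagb G ->
    exists s : seq {set T},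
      [/\ path adjacent_any F s, last F s = G &
          all (fun H : {set T} => (F :&: G) \subset H) (F :: s)].

Definition is_polytope4 : Prop :=
  [/\ reflexive le, antisymmetric le & transitive le] /\
  (exists b, forall x, le b x) /\ (exists t, forall x, le x t) /\
  (forall x y, ltp x y -> rk x < rk y)%N /\
  (forall x, rk x < 6)%N /\
  (forall F, flagb F -> forall i, (i < 6)%N -> exists2 x, x \in F & rk x = i) /\
  (forall x y, ltp x y -> rk y = (rk x).+2 ->
       #|[set z | ltp x z && ltp z y]| = 2%N) /\
  strongly_flag_connected.

Definition is_aut (s : {perm T}) : Prop := forall x y, le (s x) (s y) = le x y.

Definition flag_img (s : {perm T}) (F : {set T}) : {set T} := [set s x | x in F].

Definition same_orbit (F G : {set T}) : Prop :=
  exists s : {perm T}, is_aut s /\ flag_img s F = G.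

(* chiral: exactly two flag orbits under Aut, adjacent flags in distinct orbits *)
Definition chiral : Prop :=
  forall (F G H : {set T}) (j : nat), flagb F -> flagb G -> (j < 4)%N ->
    adjacent j F H -> ~ same_orbit F H /\ (same_orbit F G \/ same_orbit H G).

(* sigma_i with base flag Phi: Phi sigma_i = Phi^{i,i-1} = (Phi^i)^{i-1} *)
Definition std_gen (Phi : {set T}) (i : nat) (s : {perm T}) : Prop :=
  is_aut s /\ exists Psi, adjacent i Phi Psi /\ adjacent i.-1 Psi (flag_img s Phi).

Definition tight_chiral4 (p q r : nat) (Phi : {set T}) (s1 s2 s3 : {perm T}) : Prop :=
  [/\ is_polytope4, chiral & flagb Phi] /\
  [/\ std_gen Phi 1 s1, std_gen Phi 2 s2 & std_gen Phi 3 s3] /\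
  [/\ #[s1]%g = p, #[s2]%g = q & #[s3]%g = r] /\
  #|[set F : {set T} | flagb F]| = (2 * p * q * r)%N.

End Polytope.

Definition gpowz (gT : finGroupType) (x : gT) (z : int) : gT :=
  match z with
  | Posz n => (x ^+ n)%g
  | Negz n => ((x ^+ n.+1)^-1)%g
  end.

(* Main.v *)
Require Import Defs.
From mathcomp Require Import all_boot all_order all_algebra all_fingroup.
From mathcomp Require Import cyclic zify.
Import GRing.Theory.
Set Implicit Arguments. Unset Strict Implicit. Unset Printing Implicit Defensive.

Section Geo.
Variables (T : finType) (le : rel T) (rk : T -> nat).
Hypothesis HP : is_polytope4 le rk.

Lemma le_refl : reflexive le. Proof. by case: HP => [[]]. Qed.
Lemma ltp_rk x y : ltp le x y -> rk x < rk y.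
Proof. by case: HP => _ [_ [_ [H _]]]; exact: H. Qed.
Lemma rk_lt6 x : rk x < 6. Proof. by case: HP => _ [_ [_ [_ [H _]]]]. Qed.
Lemma flag_face F i : flagb le F -> i < 6 -> exists2 x, x \in F & rk x = i.
Proof. by case: HP => _ [_ [_ [_ [_ [H _]]]]] fF i6; exact: H fF i i6. Qed.
Lemma diamond x y : ltp le x y -> rk y = (rk x).+2 ->
       #|[set z | ltp le x z && ltp le z y]| = 2.
Proof. by case: HP => _ [_ [_ [_ [_ [_ [H _]]]]]]; exact: H. Qed.
Lemma sfc : strongly_flag_connected le. Proof. by case: HP => _ [_ [_ [_ [_ [_ [_ H]]]]]]. Qed.

Lemma flag_chain F x y : flagb le F -> x \in F -> y \in F -> le x y || le y x.
Proof.
case/andP=> /forall_inP H _ xF yF; exact: (forall_inP (H x xF) y yF).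
Qed.

Lemma flag_uniq F x y : flagb le F -> x \in F -> y \in F -> rk x = rk y -> x = y.
Proof.
move=> fF xF yF exy; case: (eqVneq x y) => // nxy.
case/orP: (flag_chain fF xF yF) => H.
- have := ltp_rk (x:=x) (y:=y); rewrite /ltp H nxy exy ltnn; by move/(_ isT).
- have := ltp_rk (x:=y) (y:=x); rewrite /ltp H eq_sym nxy exy ltnn; by move/(_ isT).
Qed.

Lemma flag_lt F x y : flagb le F -> x \in F -> y \in F -> rk x < rk y -> ltp le x y.
Proof.
move=> fF xF yF lxy; have nxy : x != y by apply/eqP => e; rewrite e ltnn in lxy.
case/orP: (flag_chain fF xF yF) => H; first by rewrite /ltp H nxy.
have := ltp_rk (x:=y) (y:=x); rewrite /ltp H eq_sym nxy => /(_ isT).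
by rewrite ltnNge ltnW.
Qed.

Lemma adjP j F G : adjacent le rk j F G <->
  [/\ flagb le F, flagb le G, F != G &
      forall x, rk x != j.+1 -> (x \in F) = (x \in G)].
Proof.
rewrite /adjacent; split.
- case/and4P => fF fG nFG /eqP E; split => // x nx.
  have := congr1 (fun A : {set T} => x \in A) E; by rewrite !inE nx !andbT.
- case=> fF fG nFG H; rewrite fF fG nFG /=; apply/eqP/setP => x.
  rewrite !inE; case: (eqVneq (rk x) j.+1) => [_|nx]; first by rewrite !andbF.
  by rewrite !andbT H.
Qed.

Lemma flag_eq F G r : flagb le F -> flagb le G ->
  (forall x, rk x != r -> (x \in F) = (x \in G)) ->
  (forall x, x \in F -> rk x = r -> x \in G) -> F = G.
Proof.
move=> fF fG H1 H2; apply/setP => x.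
case: (eqVneq (rk x) r) => [ex|nx]; last exact: H1.
apply/idP/idP => [xF|xG]; first exact: H2.
have [y yF ey] := flag_face fF (rk_lt6 x).
have yG : y \in G by apply: H2 => //; rewrite ey.
by rewrite (flag_uniq fG xG yG (esym ey)).
Qed.

Lemma adj_sym j F G : adjacent le rk j F G -> adjacent le rk j G F.
Proof.
case/adjP => fF fG nFG H; apply/adjP; split => //; first by rewrite eq_sym.
by move=> x /H ->.
Qed.

Lemma pigeon lo hi f g h : ltp le lo hi -> rk hi = (rk lo).+2 ->
  ltp le lo f -> ltp le f hi -> ltp le lo g -> ltp le g hi ->
  ltp le lo h -> ltp le h hi -> f != g -> f != h -> g = h.
Proof.
move=> lh rh lf fh lg gh lh' hh nfg nfh; apply/eqP/negP => /negP ngh.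
have S : (f |: [set g; h]) \subset [set z | ltp le lo z && ltp le z hi].
  apply/subsetP => z; rewrite !inE => Hz; apply/andP; case/orP: Hz => [|/orP []] /eqP -> ; split => //.
have := subset_leq_card S; rewrite diamond //.
by rewrite cardsU1 cards2 !inE negb_or nfg nfh ngh.
Qed.

Lemma adj_face j F G : j < 4 -> adjacent le rk j F G ->
  exists f g lo hi, [/\ f \in F, g \in G, rk f = j.+1, rk g = j.+1 & f != g] /\
   [/\ lo \in F, hi \in F, lo \in G & hi \in G] /\ (rk lo = j /\ rk hi = j.+2) /\
   [/\ ltp le lo f, ltp le f hi, ltp le lo g & ltp le g hi].
Proof.
move=> j4 /adjP [fF fG nFG H].
have j1 : j.+1 < 6 by lia.
have j0 : j < 6 by lia.
have j2 : j.+2 < 6 by lia.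
have [f fin rf] := flag_face fF j1.
have [g gin rg] := flag_face fG j1.
have [lo loF rlo] := flag_face fF j0.
have [hi hiF rhi] := flag_face fF j2.
have loG : lo \in G by rewrite -H // rlo neq_ltn ltnSn.
have hiG : hi \in G by rewrite -H // rhi neq_ltn ltnSn orbT.
have nfg : f != g.
  apply: contra nFG => /eqP efg; apply/eqP; apply: (flag_eq (r := j.+1)) => //.
  by move=> x xF rx; rewrite (flag_uniq fF xF fin (etrans rx (esym rf))) efg.
exists f, g, lo, hi; split => //; split => //; split => //.
split; [apply: (flag_lt fF) | apply: (flag_lt fF) | apply: (flag_lt fG) | apply: (flag_lt fG)];
  by rewrite // ?rlo ?rhi ?rf ?rg.
Qed.

Lemma adj_uniq j F G H : j < 4 -> adjacent le rk j F G -> adjacent le rk j F H -> G = H.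
Proof.
move=> j4 aG aH.
have [f [g [lo [hi [[fF gG rf rg nfg] [[loF hiF loG hiG] [[rlo rhi] [lf fh lg gh]]]]]]]] := adj_face j4 aG.
have [f' [h [lo' [hi' [[fF' hH rf' rh nfh] [[loF' hiF' loH hiH] [[rlo' rhi'] [lf' fh' lh hh]]]]]]]] := adj_face j4 aH.
have ef : f' = f by apply: (flag_uniq (F:=F)) => //; [case/adjP: aG | rewrite rf rf'].
have el : lo' = lo by apply: (flag_uniq (F:=F)) => //; [case/adjP: aG | rewrite rlo rlo'].
have eh : hi' = hi by apply: (flag_uniq (F:=F)) => //; [case/adjP: aG | rewrite rhi rhi'].
subst f' lo' hi'.
have egh : g = h.
  apply: (pigeon (lo:=lo) (hi:=hi) (f:=f)) => //.
    by apply: (flag_lt (F:=F)) => //; [case/adjP: aG | rewrite rlo rhi].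
  by rewrite rhi rlo.
case/adjP: aG => fF0 fG _ HG; case/adjP: aH => _ fH _ HH.
apply: (flag_eq (r := j.+1)) => //.
  by move=> x nx; rewrite -HG // HH.
move=> x xG rx; rewrite (flag_uniq fG xG gG (etrans rx (esym rg))) egh //.
Qed.


Lemma adj_comm i j A B C D : i < 4 -> j < 4 -> (i.+1 < j) || (j.+1 < i) ->
  adjacent le rk i A B -> adjacent le rk j B C -> adjacent le rk j A D ->
  adjacent le rk i D C.
Proof.
move=> i4 j4 ij.
have j1 : j.+1 < 6 by lia.
have i1 : i.+1 < 6 by lia.
have n1 : j != i.+1 by lia.
have n2 : j.+2 != i.+1 by lia.
have n3 : j.+1 != i.+1 by lia.
have n4 : j != j.+1 by lia.
have n5 : j.+2 != j.+1 by lia.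
have n6 : i.+1 != j.+1 by lia.
move=> aAB aBC aAD.
have [a [d [lo [hi [[ain din ra rd nad] [[loA hiA loD hiD] [[rlo rhi] [la ah ld dh]]]]]]]] := adj_face j4 aAD.
case/adjP: (aAB) => fA fB nAB HAB.
case/adjP: (aBC) => _ fC nBC HBC.
case/adjP: (aAD) => _ fD nAD HAD.
have [c cin rc] := flag_face fC j1.
have loB : lo \in B by rewrite -HAB // rlo.
have loC : lo \in C by rewrite -HBC // rlo.
have hiB : hi \in B by rewrite -HAB // rhi.
have hiC : hi \in C by rewrite -HBC // rhi.
have lc : ltp le lo c by apply: (flag_lt fC) => //; rewrite rlo rc.
have ch : ltp le c hi by apply: (flag_lt fC) => //; rewrite rhi rc.
have aB : a \in B by rewrite -HAB // ra.
have nac : a != c.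
  apply/eqP => eac; move/eqP: nBC; apply; apply: (flag_eq (r := j.+1)) => //.
  by move=> x xB rx; rewrite (flag_uniq fB xB aB (etrans rx (esym ra))) eac.
have edc : d = c.
  apply: (pigeon (lo:=lo) (hi:=hi) (f:=a)) => //.
    by apply: (flag_lt fA) => //; rewrite rlo rhi.
  by rewrite rhi rlo.
apply/adjP; split => //.
  apply/eqP => eDC.
  have [a' a'A ra'] := flag_face fA i1.
  have a'D : a' \in D by rewrite -HAD // ra'.
  have a'B : a' \in B by rewrite HBC -?eDC // ra'.
  move/eqP: nAB; apply; apply: (flag_eq (r := i.+1)) => //.
  by move=> x xA rx; rewrite (flag_uniq fA xA a'A (etrans rx (esym ra'))).
move=> x nx; case: (eqVneq (rk x) j.+1) => [ex|nxj].
  apply/idP/idP => H.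
    by rewrite (flag_uniq fD H din (etrans ex (esym rd))) edc.
  by rewrite (flag_uniq fC H cin (etrans ex (esym rc))) -edc.
by rewrite -HAD // HAB // HBC.
Qed.

Local Open Scope group_scope.
Lemma aut_inv (s : {perm T}) : is_aut le s -> is_aut le s^-1.
Proof. by move=> H x y; rewrite -H !permKV. Qed.

Lemma aut_mul (s t : {perm T}) : is_aut le s -> is_aut le t -> is_aut le (s * t).
Proof. by move=> Hs Ht x y; rewrite !permM Ht Hs. Qed.

Lemma flag_imgE (s : {perm T}) (F : {set T}) x : (x \in flag_img s F) = (s^-1 x \in F).
Proof.
apply/imsetP/idP => [[y yF ->]|H]; first by rewrite permK.
by exists (s^-1 x); rewrite ?permKV.
Qed.

Lemma flag_img_mem (s : {perm T}) (F : {set T}) x : (s x \in flag_img s F) = (x \in F).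
Proof. by rewrite flag_imgE permK. Qed.

Lemma flag_imgM (s t : {perm T}) (F : {set T}) : flag_img (s * t) F = flag_img t (flag_img s F).
Proof. by apply/setP => x; rewrite !flag_imgE invMg permM. Qed.

Lemma flag_imgK (s : {perm T}) (F : {set T}) : flag_img s (flag_img s^-1 F) = F.
Proof. by rewrite -flag_imgM mulVg; apply/setP => x; rewrite flag_imgE invg1 perm1. Qed.

Lemma flag_img1 (s : {perm T}) (F : {set T}) : s = 1%g -> flag_img s F = F.
Proof. by move=> ->; apply/setP => x; rewrite flag_imgE invg1 perm1. Qed.

Lemma chain_img (s : {perm T}) (A : {set T}) : is_aut le s -> chainb le A -> chainb le (flag_img s A).
Proof.
move=> Hs /forall_inP H; apply/forall_inP => x; rewrite flag_imgE => xA.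
apply/forall_inP => y; rewrite flag_imgE => yA.
have := forall_inP (H _ xA) _ yA.
by rewrite -(Hs (s^-1 x)) -(Hs (s^-1 y)) !permKV.
Qed.

Lemma flag_img_flag (s : {perm T}) (F : {set T}) : is_aut le s -> flagb le F -> flagb le (flag_img s F).
Proof.
move=> Hs /andP [cF /forallP mF]; rewrite /flagb chain_img //=.
apply/forallP => B; apply/implyP => /andP [sub cB].
have cB' := chain_img (aut_inv Hs) cB.
have sub' : F \subset flag_img s^-1 B.
  apply/subsetP => x xF; rewrite flag_imgE invgK.
  by apply: (subsetP sub); rewrite flag_img_mem.
have := implyP (mF (flag_img s^-1 B)); rewrite sub' cB' => /(_ isT) /eqP <-.
by rewrite flag_imgK.
Qed.

Lemma card_below (F : {set T}) x : flagb le F -> x \in F ->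
  #|[set y in F | rk y < rk x]| = rk x.
Proof.
move=> fF xF; set S := [set y in F | rk y < rk x].
rewrite cardE -(size_map rk) -(size_iota 0 (rk x)); apply: perm_size.
apply: uniq_perm; first rewrite map_inj_in_uniq ?enum_uniq //.
- move=> y z; rewrite !mem_enum !inE => /andP [yF _] /andP [zF _].
  exact: flag_uniq fF yF zF.
- exact: iota_uniq.
move=> r; rewrite mem_iota add0n /=; apply/mapP/idP => [[y]|lr].
  by rewrite mem_enum inE => /andP [_ ?] ->.
have r6 : r < 6 by apply: ltn_trans lr (rk_lt6 x).
have [y yF ry] := flag_face fF r6.
by exists y => //; rewrite mem_enum inE yF ry.
Qed.

Lemma lt_rk_flag (F : {set T}) x y : flagb le F -> x \in F -> y \in F -> (rk y < rk x) = ltp le y x.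
Proof.
move=> fF xF yF; apply/idP/idP => H; [exact: flag_lt fF yF xF H | exact: ltp_rk H].
Qed.

Lemma ltp_aut (s : {perm T}) x y : is_aut le s -> ltp le (s x) (s y) = ltp le x y.
Proof. by move=> Hs; rewrite /ltp Hs (inj_eq perm_inj). Qed.

Lemma card_img (s : {perm T}) (A : {set T}) : #|flag_img s A| = #|A|.
Proof. by rewrite card_imset //; exact: perm_inj. Qed.

Lemma rk_aut (s : {perm T}) (F : {set T}) x : is_aut le s -> flagb le F -> x \in F -> rk (s x) = rk x.
Proof.
move=> Hs fF xF.
have fsF := flag_img_flag Hs fF.
have sxF : s x \in flag_img s F by rewrite flag_img_mem.
rewrite -(card_below fsF sxF) -(card_below fF xF).
have -> : [set y in flag_img s F | rk y < rk (s x)] =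
          flag_img s [set y in F | rk (s y) < rk (s x)].
  by apply/setP => z; rewrite !inE !flag_imgE inE permKV.
rewrite card_img; apply: eq_card => y; rewrite !inE.
case yF : (y \in F) => //=.
rewrite (lt_rk_flag fsF sxF) ?flag_img_mem // (lt_rk_flag fF xF yF) ltp_aut //.
Qed.

End Geo.

Section Geo2.
Variables (T : finType) (le : rel T) (rk : T -> nat).
Hypothesis HP : is_polytope4 le rk.
Local Open Scope group_scope.

Lemma adj_aut (s : {perm T}) j F G : is_aut le s -> adjacent le rk j F G ->
  adjacent le rk j (flag_img s F) (flag_img s G).
Proof.
move=> Hs /adjP [fF fG nFG H]; apply/adjP; split.
- exact: flag_img_flag.
- exact: flag_img_flag.
- apply: contra nFG => /eqP E; apply/eqP.
  by rewrite -(flag_imgK s^-1 F) -(flag_imgK s^-1 G) invgK E.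
move=> x nx; rewrite !flag_imgE.
have E1 y (K : {set T}) : flagb le K -> y \in K -> rk (s y) = rk y.
  by move=> fK yK; apply: (rk_aut HP Hs fK yK).
apply/idP/idP => yin.
  by rewrite -H // -(E1 _ _ fF yin) permKV.
by rewrite H // -(E1 _ _ fG yin) permKV.
Qed.

Lemma ext_in_flag b F : flagb le F -> (forall y, le b y || le y b) -> b \in F.
Proof.
move=> /andP [cF /forallP mF] Hb.
have := implyP (mF (b |: F)); rewrite subsetUr /= => H.
have cB : chainb le (b |: F).
  apply/forall_inP => x; rewrite !inE => /orP [/eqP ->|xF]; apply/forall_inP => y;
  rewrite !inE => /orP [/eqP ->|yF].
  - by rewrite (le_refl HP).
  - exact: Hb.
  - by rewrite orbC; exact: Hb.
  - exact: (forall_inP (forall_inP cF x xF) y yF).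
by move/eqP: (H cB) => <-; rewrite setU11.
Qed.

Lemma adj_any_adj F G : adjacent_any le F G -> exists2 j, j < 4 & adjacent le rk j F G.
Proof.
case/and3P => fF fG /cards1P [x Ex].
have xF : x \in F by have := set11 x; rewrite -Ex inE => /andP [].
have xG : x \notin G by have := set11 x; rewrite -Ex inE => /andP [].
have H : forall z, rk z != rk x -> (z \in F) = (z \in G).
  move=> z nz; apply/idP/idP => zin.
    apply/negPn/negP => zG.
    have : z \in F :\: G by rewrite inE zG.
    by rewrite Ex inE => /eqP ez; rewrite ez eqxx in nz.
  have [y yF ey] := flag_face HP fF (rk_lt6 HP z).
  have yG : y \in G.
    apply/negPn/negP => yG.
    have : y \in F :\: G by rewrite inE yG.
    by rewrite Ex inE => /eqP ey'; rewrite -ey -ey' eqxx in nz.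
  by rewrite -(flag_uniq HP fG yG zin ey).
have nFG : F != G by apply/eqP => E; rewrite -E xF in xG.
case: HP => _ [[b Hb] [[t Ht] _]].
have bF : b \in F by apply: ext_in_flag => // y; rewrite Hb.
have bG : b \in G by apply: ext_in_flag => // y; rewrite Hb.
have tF : t \in F by apply: ext_in_flag => // y; rewrite Ht orbT.
have tG : t \in G by apply: ext_in_flag => // y; rewrite Ht orbT.
have r0 : rk x != 0.
  apply/eqP => r0; case: (eqVneq b x) => [ebx|nbx]; first by rewrite -ebx bG in xG.
  have := ltp_rk HP (x:=b) (y:=x); rewrite /ltp Hb nbx r0 => /(_ isT).
  by [].
have r5 : rk x != 5.
  apply/eqP => r5; case: (eqVneq x t) => [ebx|nbx]; first by rewrite ebx tG in xG.
  have := ltp_rk HP (x:=x) (y:=t); rewrite /ltp Ht nbx r5 => /(_ isT).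
  by have := rk_lt6 HP t; lia.
have r6 := rk_lt6 HP x.
exists (rk x).-1; first by lia.
apply/adjP; split => // z nz; apply: H.
by move: nz; have -> : (rk x).-1.+1 = rk x by lia.
Qed.

End Geo2.

Section Geo3.
Variables (T : finType) (le : rel T) (rk : T -> nat).
Hypothesis HP : is_polytope4 le rk.
Local Open Scope group_scope.

Lemma in_some_flag x : exists2 F, flagb le F & x \in F.
Proof.
pose P := fun A : {set T} => chainb le A && (x \in A).
have P0 : P [set x].
  rewrite /P set11 andbT; apply/forall_inP => y; rewrite inE => /eqP ->.
  by apply/forall_inP => z; rewrite inE => /eqP ->; rewrite (le_refl HP).
case: (@arg_maxnP _ [set x] P (fun A : {set T} => #|A|) P0) => A /andP [cA xA] Hmax.
exists A => //; rewrite /flagb cA /=; apply/forallP => B; apply/implyP => /andP [sub cB].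
rewrite eq_sym eqEcard sub /=; apply: Hmax; rewrite /P cB /=.
exact: (subsetP sub).
Qed.

Lemma aut_fix (s : {perm T}) F : is_aut le s -> flagb le F -> flag_img s F = F -> s = 1.
Proof.
move=> Hs fF sF.
have allG : forall G, flagb le G -> flag_img s G = G.
  move=> G fG; have [p [Hp Hl _]] := sfc HP fF fG.
  elim: p F fF sF Hp Hl => [|H p IH] F' fF' sF' /=; first by move=> _ <-.
  case/andP => aFH Hp Hl.
  have [j j4 aj] := adj_any_adj HP aFH.
  have := adj_aut HP Hs aj; rewrite sF' => aj'.
  have eH := adj_uniq HP j4 aj' aj.
  by case/adjP: aj => _ fH _ _; apply: (IH H).
apply/permP => x; rewrite perm1.
have [G fG xG] := in_some_flag x.
apply: (flag_uniq HP fG) => //. 2: exact: (rk_aut HP Hs fG xG).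
by rewrite -(allG G fG) flag_img_mem.
Qed.

Lemma std_step Phi a (s : {perm T}) Q c W : a.-1 < 4 ->
  std_gen le rk Phi a s -> adjacent le rk a.-1 Phi Q -> adjacent le rk c Q W ->
  exists P, adjacent le rk a Phi P /\ adjacent le rk c P (flag_img s W).
Proof.
move=> a4 [Hs [Psi [aP aPX]]] aQ aW.
exists Psi; split => //.
have e : flag_img s Q = Psi.
  apply: (adj_uniq HP a4 (adj_aut HP Hs aQ)); exact: adj_sym.
by rewrite -e; apply: adj_aut.
Qed.

Lemma chain_inv Phi (g : {perm T}) i j P : i < 4 -> j < 4 -> (i.+1 < j) || (j.+1 < i) ->
  is_aut le g -> flagb le Phi -> adjacent le rk i Phi P ->
  adjacent le rk j P (flag_img g Phi) -> g * g = 1.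
Proof.
move=> i4 j4 ij Hg fPhi a1 a2.
have b1 := adj_aut HP Hg a1; have b2 := adj_aut HP Hg a2.
have ji : (j.+1 < i) || (i.+1 < j) by rewrite orbC.
have c : adjacent le rk j (flag_img g P) Phi.
  exact: (adj_comm HP j4 i4 ji (adj_sym a2) (adj_sym a1) b1).
have e := adj_uniq HP j4 c b2.
apply: (aut_fix (F := Phi)) => //; first exact: aut_mul.
by rewrite flag_imgM -e.
Qed.

End Geo3.
Section Geo4.
Local Open Scope group_scope.

Lemma std_rels (T : finType) (le : rel T) (rk : T -> nat) p q r Phi (s1 s2 s3 : {perm T}) :
  tight_chiral4 le rk p q r Phi s1 s2 s3 ->
  [/\ (s1 * s2) ^+ 2 = 1, (s2 * s3) ^+ 2 = 1 & (s1 * s2 * s3) ^+ 2 = 1].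
Proof.
case=> [[HP _ fPhi] [[g1 g2 g3] _]].
have g2' := g2; have g3' := g3.
case: g1 => Hs1 [P1 [a11 a10]].
case: g2 => Hs2 [P2 [a22 a21]].
case: g3 => Hs3 [P3 [a33 a32]].
have [Q [b2 b0]] := std_step HP (isT : 2.-1 < 4) g2' a11 a10.
rewrite -flag_imgM in b0.
have [Q' [c3 c1]] := std_step HP (isT : 3.-1 < 4) g3' a22 a21.
rewrite -flag_imgM in c1.
have [Q'' [d3 d0]] := std_step HP (isT : 3.-1 < 4) g3' b2 b0.
rewrite -flag_imgM in d0.
rewrite !expgS expg0 !mulg1; split.
- apply: (chain_inv HP (i:=2) (j:=0)) b2 b0 => //; exact: aut_mul.
- apply: (chain_inv HP (i:=3) (j:=1)) c3 c1 => //; exact: aut_mul.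
- apply: (chain_inv HP (i:=3) (j:=0)) d3 d0 => //; do 2 apply: aut_mul => //.
Qed.

End Geo4.

Section Ctx.
Local Open Scope group_scope.
Variable gT : finGroupType.
Implicit Types (x r : gT).
Lemma ctx2 x (l1 l2 : gT) r : l1 * l2 = r -> x * l1 * l2 = x * r.
Proof. by move=> <-; rewrite mulgA. Qed.
Lemma ctx3 x (l1 l2 l3 : gT) r : l1 * l2 * l3 = r -> x * l1 * l2 * l3 = x * r.
Proof. by move=> <-; rewrite !mulgA. Qed.
Lemma ctx4 x (l1 l2 l3 l4 : gT) r : l1 * l2 * l3 * l4 = r -> x * l1 * l2 * l3 * l4 = x * r.
Proof. by move=> <-; rewrite !mulgA. Qed.
Lemma ctx5 x (l1 l2 l3 l4 l5 : gT) r : l1 * l2 * l3 * l4 * l5 = r -> x * l1 * l2 * l3 * l4 * l5 = x * r.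
Proof. by move=> <-; rewrite !mulgA. Qed.
Lemma eq1r x (y : gT) : x * y = 1 -> x = y^-1.
Proof. by move=> H; rewrite -(mulgK y x) H mul1g. Qed.
Lemma eq1l x (y : gT) : x * y = 1 -> y = x^-1.
Proof. by move=> H; rewrite -(mulKg x y) H mulg1. Qed.
Lemma xpp x (y : gT) i j : x * y ^+ i * y ^+ j = x * y ^+ (i + j).
Proof. by rewrite -mulgA -expgD. Qed.
Lemma mulVr x (y : gT) : x * y^-1 * y = x. Proof. by rewrite mulgKV. Qed.
Lemma mulrV x (y : gT) : x * y * y^-1 = x. Proof. by rewrite mulgK. Qed.
End Ctx.

Section Grp.
Local Open Scope group_scope.
Variables (gT : finGroupType) (a b c : gT) (m : nat).
Local Notation q := (8 * m + 8)%N.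
Local Notation N := (32 * m + 32)%N.
Local Notation h := (16 * m + 16)%N.
Hypothesis Hb : b ^+ N = 1.
Hypothesis Ha4 : a ^+ 4 = 1.
Hypothesis Hab : (a * b) ^+ 2 = 1.
Hypothesis Habc : (a * b * c) ^+ 2 = 1.
Hypothesis Hbc : (b * c) ^+ 2 = 1.
Hypothesis HA : b^-1 * a = a^-1 * b ^+ (1 + h).

Lemma bpowN k x : b ^+ (x + k * N) = b ^+ x.
Proof. by rewrite expgD mulnC expgM Hb expg1n mulg1. Qed.

Lemma binv n : n <= N -> (b ^+ n)^-1 = b ^+ (N - n).
Proof. by move=> nN; apply/esym/eq1r; rewrite -expgD subnK. Qed.

Lemma a2V : (a * a)^-1 = a * a.
Proof. by apply/esym/eq1r; rewrite -Ha4 !expgS expg0 mulg1 !mulgA. Qed.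

Lemma uV : (a * b)^-1 = a * b.
Proof. by apply/esym/eq1r; rewrite -expg2. Qed.

Lemma aba : a * b * a = b^-1.
Proof. by apply: eq1r; rewrite -Hab expg2 !mulgA. Qed.

Lemma bab : b * a * b = a^-1.
Proof. by apply: eq1l; rewrite -Hab expg2 !mulgA. Qed.

Lemma a2ba2 : a * a * b * a * a = b ^+ (1 + h).
Proof.
rewrite -[LHS]mul1g !mulgA (ctx3 _ aba) -mulgA HA mul1g mulKVg //.
Qed.

Lemma a4 : a * a * a * a = 1.
Proof. by rewrite -Ha4 !expgS expg0 mulg1 !mulgA. Qed.

Lemma aV : a^-1 = a * a * a.
Proof. by apply/esym/eq1r; rewrite a4. Qed.

Lemma conj_a2 n : (b ^+ n) ^ (a * a) = b ^+ ((1 + h) * n).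
Proof. by rewrite conjXg conjgE a2V !mulgA a2ba2 expgM. Qed.

Lemma a2bn n : a * a * b ^+ n = b ^+ ((1 + h) * n) * (a * a).
Proof.
by rewrite -conj_a2 conjgE a2V !mulgA (ctx4 _ a4) mulg1.
Qed.

Lemma conj_u_b : b ^ (a * b) = b^-1 * (a * a).
Proof.
by rewrite conjgE uV !mulgA (ctx3 _ bab) -aba aV !mulgA.
Qed.

Lemma w2 : (b^-1 * (a * a)) ^+ 2 = b ^+ (16 * m + 14).
Proof.
have E : a * a * b^-1 * a * a = (b ^+ (1 + h))^-1.
  by apply: eq1r; rewrite -a2ba2 !mulgA (ctx4 _ a4) mulg1 mulVr a4.
rewrite expg2 !mulgA (ctx5 _ E) -invMg -expgSr binv; last by lia.
by congr (b ^+ _); lia.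
Qed.

Lemma conj_u_b2n n : (b ^+ (2 * n)) ^ (a * b) = b ^+ ((16 * m + 14) * n).
Proof. by rewrite expgM conjXg conjXg conj_u_b w2 -expgM. Qed.

Lemma conj_u_c : c ^ (a * b) = c^-1.
Proof.
rewrite conjgE uV; apply: eq1r.
by rewrite -Habc expg2 !mulgA.
Qed.

Lemma cbc : c * b * c = b^-1.
Proof. by apply: eq1l; rewrite -Hbc expg2 !mulgA. Qed.

Lemma bcV : (b * c)^-1 = b * c.
Proof. by apply/esym/eq1r; rewrite -expg2. Qed.

Lemma tat : b * c * a * b * c = a^-1.
Proof. by apply: eq1l; rewrite -Habc expg2 !mulgA. Qed.

Lemma ta2t : b * c * a * a * b * c = a * a.
Proof.
rewrite -a2V invMg -tat !mulgA.
have tt : b * c * b * c = 1 by rewrite -Hbc expg2 !mulgA.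
by rewrite (ctx4 _ tt) mulg1.
Qed.

Lemma bca2 : b * c * a * a = a * a * b * c.
Proof.
have := ta2t; rewrite -!mulgA => E.
rewrite -[LHS]mulg1 -(mulgV (b * c)) bcV !mulgA.
by rewrite -[X in _ = X]mulgA -E !mulgA.
Qed.

Lemma step_i : c * a * a * c^-1 = b ^+ h * (a * a).
Proof.
rewrite -[LHS](mulKg b) !mulgA (ctx4 _ bca2) !mulgA mulrV.
have := a2bn 1; rewrite !expg1 muln1 => E.
by rewrite (ctx3 _ E) expgD expg1 !mulgA mulVg mul1g.
Qed.

Lemma partA e e' K K' : e + e' = 4 ->
  ((1 + e * q) * (1 + e' * q) = 1 + K' * N)%N ->
  (e' * q + (1 + h) * ((16 * m + 14) * (e * (4 * m + 4))) = h + K * N)%N ->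
  b * c ^+ 2 = c ^+ 2 * b ^+ (1 + e * q) -> b ^+ h = 1.
Proof.
move=> He Hkk HK HB.
set w := b^-1 * (a * a).
set y := (c ^+ 2)^-1.
have conjE (x : gT) : c ^+ 2 * x * y = x ^ y by rewrite conjgE /y invgK mulgA.
have Bu : w * y = y * w ^+ (1 + e * q).
  have := congr1 (conjg^~ (a * b)) HB.
  rewrite /= !conjMg !conjXg conj_u_c conj_u_b => H.
  by rewrite /y /w expgS expg1 invMg; exact: H.
have cw : w ^ y = w ^+ (1 + e * q) by rewrite -conjE -mulgA Bu mulgA /y mulgV mul1g.
have wk : w ^+ (1 + e * q) = w * b ^+ ((16 * m + 14) * (e * (4 * m + 4))).
  rewrite expgD expg1 (_ : (e * q = 2 * (e * (4 * m + 4)))%N); last by lia.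
  by rewrite expgM w2 -expgM.
have v : b ^ y = b ^+ (1 + e' * q).
  have bk : (b ^ y) ^+ (1 + e * q) = b.
    by rewrite -conjXg -conjE -HB mulgK.
  have bN : (b ^ y) ^+ N = 1 by rewrite -conjXg Hb conj1g.
  have : b ^ y = (b ^ y) ^+ ((1 + e * q) * (1 + e' * q)).
    by rewrite Hkk expgD expg1 (mulnC K') expgM bN expg1n mulg1.
  by rewrite expgM bk => <-.
have ii : c ^+ 2 * (a * a) * y = b ^+ h * (a * a).
  have Eaa : a * a = b * w by rewrite /w mulKVg.
  rewrite [in LHS]Eaa conjE conjMg v cw wk /w !mulgA (addnC 1%N (e' * q)%N) (expgD b (e' * q)%N 1) expg1 mulgK.
  by rewrite (ctx3 _ (a2bn _)) !mulgA -expgD HK bpowN ?mulgA.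
move: ii; rewrite /y expgS expg1 invMg !mulgA (ctx4 _ step_i) => E.
have E2 : c * b ^+ h * c^-1 * (b ^+ h * (a * a)) = b ^+ h * (a * a).
  by rewrite -{1}step_i !mulgA mulgKV -E !mulgA.
have E3 : c * b ^+ h * c^-1 = 1 by apply: (mulIg (b ^+ h * (a * a))); rewrite E2 mul1g.
move: E3; rewrite -mulgA -{1}(invgK c) -conjgE => /eqP; rewrite conjg_eq1 => /eqP //.
Qed.

Lemma partB e K :
  (3 <= e * q)%N -> (e * q - 3 <= N)%N ->
  (N - (e * q - 3) = (N + 2 - e * q).+1)%N ->
  (2 + e * q = 2 * (1 + e * (4 * m + 4)))%N ->
  ((N + 2 - e * q) + (16 * m + 14) * (1 + e * (4 * m + 4)) = 0 + K * N)%N ->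
  c ^+ (2 * q) = 1 ->
  c^-1 * b = b ^+ (3 + e * q) * c ^+ (q + 1) ->
  c * b^-1 = b ^+ (e * q - 3) * c ^+ (q - 1) ->
  b ^+ h = 1.
Proof.
move=> h1 h2 h3 h4 h5 Hc HB HC.
have cinv : c^-1 = b * c * b by apply/esym/eq1r; rewrite -Hbc expg2 !mulgA.
have R1 : c * b ^+ 2 = b ^+ (2 * (1 + e * (4 * m + 4))) * c ^+ (q + 1).
  rewrite -h4; apply: (mulgI b).
  rewrite (mulgA b (b ^+ _)) -(expgS b (2 + e * q)%N) expg2 !mulgA.
  by move: HB; rewrite cinv ?mulgA.
have cqV : (c ^+ (q - 1))^-1 = c ^+ (q + 1).
  by apply/esym/eq1l; rewrite -expgD -Hc; congr (c ^+ _); lia.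
have R2 : b ^+ 2 * c = c ^+ (q + 1) * b ^+ (N + 2 - e * q).
  apply: (mulIg b); rewrite -[RHS]mulgA -expgSr -h3 -binv //.
  have := congr1 invg HC; rewrite !invMg invgK cqV cinv => <-.
  by rewrite expg2 !mulgA.
have cR1 : c^-1 * b ^+ (16 * m + 14) =
           b ^+ ((16 * m + 14) * (1 + e * (4 * m + 4))) * (c ^+ (q + 1))^-1.
  have cb2 := conj_u_b2n 1; rewrite !muln1 in cb2.
  have := congr1 (conjg^~ (a * b)) R1.
  rewrite /= (conjMg c (b ^+ 2)) (conjMg (b ^+ _)) cb2 (conj_u_b2n (1 + e * (4 * m + 4))).
  by rewrite conjXg conj_u_c expVgn.
have E : b ^+ h = c ^+ (q + 1) * b ^+ (N + 2 - e * q) *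
                  b ^+ ((16 * m + 14) * (1 + e * (4 * m + 4))) * (c ^+ (q + 1))^-1.
  rewrite -R2 -mulgA -mulgA -cR1 !mulgA mulgK.
  change (b ^+ h = b ^+ 2 * b ^+ (16 * m + 14)).
  by rewrite -expgD; congr (b ^+ _); lia.
by rewrite E -(mulgA (c ^+ (q + 1))) -expgD h5 bpowN expg0 mulg1 mulgV.
Qed.
End Grp.

Section Main.
Local Open Scope group_scope.

Lemma pow2 beta : (5 <= beta)%N -> exists m,
  [/\ (2 ^ beta = 32 * m + 32)%N, (2 ^ (beta - 1) = 16 * m + 16)%N & (2 ^ (beta - 2) = 8 * m + 8)%N].
Proof.
move=> hb; move: (beta - 5)%N (subnK hb) => k <-.
have p0 : (0 < 2 ^ k)%N by rewrite expn_gt0.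
exists (2 ^ k).-1.
have -> : (k + 5 - 1 = k + 4)%N by lia.
have -> : (k + 5 - 2 = k + 3)%N by lia.
rewrite !expnD; split; lia.
Qed.

Lemma powinv (gT : finGroupType) (x : gT) M n : x ^+ M = 1 -> (n <= M)%N -> (x ^+ n)^-1 = x ^+ (M - n).
Proof.
move=> HM nM; apply/esym/eq1r; rewrite -expgD subnK //.
Qed.

Lemma no_ord (gT : finGroupType) (x : gT) m : #[x] = (32 * m + 32)%N -> x ^+ (16 * m + 16) = 1 -> False.
Proof.
move=> o H; have := order_dvdn x (16 * m + 16); rewrite H eqxx o => /dvdn_leq.
lia.
Qed.

End Main.

Unset Implicit Arguments.

Theorem theorem5p11 (beta : nat) (eps : int) :
  (5 <= beta)%N -> (eps = 1%R \/ eps = (-1)%R) ->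
  (~ exists (T : finType) (le : rel T) (rk : T -> nat) (Phi : {set T})
            (s1 s2 s3 : {perm T}),
       [/\ tight_chiral4 le rk 4 (2 ^ beta) 8 Phi s1 s2 s3,
           (s2^-1 * s1 = s1^-1 * gpowz s2 (1 + (2 ^ (beta - 1))%:Z)%R)%g &
           (s2 * s3 ^+ 2 = s3 ^+ 2 * gpowz s2 (1 + eps * (2 ^ (beta - 2))%:Z)%R)%g])
  /\
  (~ exists (T : finType) (le : rel T) (rk : T -> nat) (Phi : {set T})
            (s1 s2 s3 : {perm T}),
       [/\ tight_chiral4 le rk 4 (2 ^ beta) (2 ^ (beta - 1)) Phi s1 s2 s3,
           (s2^-1 * s1 = s1^-1 * gpowz s2 (1 + (2 ^ (beta - 1))%:Z)%R)%g,
           (s3^-1 * s2 = gpowz s2 (3 + eps * (2 ^ (beta - 2))%:Z)%R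
                         * gpowz s3 (1 - (2 ^ (beta - 2))%:Z)%R)%g &
           (s3 * s2^-1 = gpowz s2 (-3 + eps * (2 ^ (beta - 2))%:Z)%R
                         * gpowz s3 (-1 + (2 ^ (beta - 2))%:Z)%R)%g]).
Proof.
move=> hb heps.
have [m [eN eh eq]] := pow2 hb.
rewrite eN eh eq.
have HAc (T : finType) (s1 s2 : {perm T}) :
    (s2^-1 * s1 = s1^-1 * gpowz s2 (1 + (16 * m + 16)%:Z)%R)%g ->
    (s2^-1 * s1 = s1^-1 * s2 ^+ (1 + (16 * m + 16)))%g.
  by rewrite -PoszD.
split.
- case=> T [le [rk [Phi [s1 [s2 [s3 [Htc HA HB]]]]]]].
  have [r12 r23 r123] := std_rels Htc.
  case: Htc => _ [_ [[o1 o2 o3] _]].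
  have Ha4 : (s1 ^+ 4 = 1)%g by rewrite -o1 expg_order.
  have Hb : (s2 ^+ (32 * m + 32) = 1)%g by rewrite -o2 expg_order.
  have HA' := HAc _ _ _ HA.
  apply: (no_ord o2).
  case: heps => -> in HB.
  + have HB' : (s2 * s3 ^+ 2 = s3 ^+ 2 * s2 ^+ (1 + 1 * (8 * m + 8)))%g.
      by rewrite HB mul1r mul1n -PoszD.
    apply: (partA Hb Ha4 r12 r123 r23 HA' (e := 1) (e' := 3)
              (K := 32 * m ^ 2 + 62 * m + 30) (K' := 6 * m + 7)) => //; [lia | nia].
  + have HB' : (s2 * s3 ^+ 2 = s3 ^+ 2 * s2 ^+ (1 + 3 * (8 * m + 8)))%g.
      rewrite HB (_ : (1 + -1 * (8 * m + 8)%:Z)%R = Negz (8 * m + 6)); last first.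
        by rewrite NegzE; lia.
      rewrite /= (powinv Hb); last by lia.
      by congr (_ * s2 ^+ _)%g; lia.
    apply: (partA Hb Ha4 r12 r123 r23 HA' (e := 3) (e' := 1)
              (K := 96 * m ^ 2 + 186 * m + 89) (K' := 6 * m + 7)) => //; [lia | nia].
- case=> T [le [rk [Phi [s1 [s2 [s3 [Htc HA HB HC]]]]]]].
  have [r12 r23 r123] := std_rels Htc.
  case: Htc => _ [_ [[o1 o2 o3] _]].
  have Ha4 : (s1 ^+ 4 = 1)%g by rewrite -o1 expg_order.
  have Hb : (s2 ^+ (32 * m + 32) = 1)%g by rewrite -o2 expg_order.
  have Hc : (s3 ^+ (2 * (8 * m + 8)) = 1)%g.
    by rewrite (_ : (2 * (8 * m + 8) = 16 * m + 16)%N) ?(esym o3) ?expg_order //; lia.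
  have HA' := HAc _ _ _ HA.
  have Hc1 : gpowz s3 (1 - (8 * m + 8)%:Z)%R = (s3 ^+ (8 * m + 8 + 1))%g.
    rewrite (_ : (1 - (8 * m + 8)%:Z)%R = Negz (8 * m + 6)); last by rewrite NegzE; lia.
    rewrite /= (powinv Hc); last by lia.
    by congr (s3 ^+ _)%g; lia.
  have Hc2 : gpowz s3 (-1 + (8 * m + 8)%:Z)%R = (s3 ^+ (8 * m + 8 - 1))%g.
    rewrite (_ : (-1 + (8 * m + 8)%:Z)%R = Posz (8 * m + 8 - 1)) //; lia.
  rewrite Hc1 in HB; rewrite Hc2 in HC.
  apply: (no_ord o2).
  case: heps => -> in HB HC.
  + have HB' : (s3^-1 * s2 = s2 ^+ (3 + 1 * (8 * m + 8)) * s3 ^+ (8 * m + 8 + 1))%g.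
      by rewrite HB mul1r mul1n -PoszD.
    have HC' : (s3 * s2^-1 = s2 ^+ (1 * (8 * m + 8) - 3) * s3 ^+ (8 * m + 8 - 1))%g.
      rewrite HC mul1r mul1n (_ : (-3 + (8 * m + 8)%:Z)%R = Posz (8 * m + 8 - 3)) //; lia.
    apply: (partB Hb Ha4 r12 r123 r23 HA' (e := 1) (K := 2 * m + 3) _ _ _ _ _ Hc HB' HC');
      rewrite ?mul1n; try lia; nia.
  + have HB' : (s3^-1 * s2 = s2 ^+ (3 + 3 * (8 * m + 8)) * s3 ^+ (8 * m + 8 + 1))%g.
      rewrite HB (_ : (3 + -1 * (8 * m + 8)%:Z)%R = Negz (8 * m + 4)); last by rewrite NegzE; lia.
      rewrite /= (powinv Hb); last by lia.
      by congr (s2 ^+ _ * _)%g; lia.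
    have HC' : (s3 * s2^-1 = s2 ^+ (3 * (8 * m + 8) - 3) * s3 ^+ (8 * m + 8 - 1))%g.
      rewrite HC (_ : (-3 + -1 * (8 * m + 8)%:Z)%R = Negz (8 * m + 10)); last by rewrite NegzE; lia.
      rewrite /= (powinv Hb); last by lia.
      by congr (s2 ^+ _ * _)%g; lia.
    apply: (partB Hb Ha4 r12 r123 r23 HA' (e := 3) (K := 6 * m + 6) _ _ _ _ _ Hc HB' HC');
      try lia; nia.
Qed.
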